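(* Let $q\equiv1\pmod{12}$, and suppose $-1/2$ is a cube and $-1/3$ is a fourth power in $\mathbb{F}_q$. Then $-1/3$ is a square in $\mathbb{F}_q$, and the line $L_c$ through $\mathbf{P}(1,0,0,1)$ and $\mathbf{P}(0,0,1,0)$ and the line $\ell_{-1/3}$ through $\mathbf{P}(0,-1/3,0,1)$ and $\mathbf{P}(1,0,1,0)$ belong to the same orbit of $G_q$.
   Context: Points of $\mathrm{PG}(3,q)$ are written $\mathbf{P}(x_0,x_1,x_2,x_3)$ over $\mathbb{F}_q$. The twisted cubic is $\mathscr{C}=\{\mathbf{P}(t^3,t^2,t,1):t\in\mathbb{F}_q\}\cup\{\mathbf{P}(1,0,0,0)\}$ and $G_q$ is the group of projectivities of $\mathrm{PG}(3,q)$ fixing $\mathscr{C}$. Two lines are in the same orbit if an element of $G_q$ maps one onto the other. *)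

(* Defs.v *)
From HB Require Import structures.
From mathcomp Require Import all_boot all_order all_algebra.
Set Implicit Arguments. Unset Strict Implicit. Unset Printing Implicit Defensive.
Import GRing.Theory.
Local Open Scope ring_scope.

(* Homogeneous coordinates: a point P(x0,x1,x2,x3) of PG(3,q) is represented by
   a nonzero row vector of F^4; vectors are multiplied on the right by matrices. *)
Definition mkpt (F : fieldType) (a b c d : F) : 'rV[F]_4 :=
  \row_(i < 4) nth 0 [:: a; b; c; d] i.

Definition pt_eq (F : fieldType) (v w : 'rV[F]_4) : Prop :=
  exists c : F, c != 0 /\ v = c *: w.

Definition on_twisted_cubic (F : fieldType) (v : 'rV[F]_4) : Prop :=
  (exists t : F, pt_eq v (mkpt (t ^+ 3) (t ^+ 2) t 1)) \/ pt_eq v (mkpt 1 0 0 0).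

Definition in_Gq (F : fieldType) (M : 'M[F]_4) : Prop :=
  M \in unitmx /\
  forall v : 'rV[F]_4, v != 0 ->
    (on_twisted_cubic v <-> on_twisted_cubic (v *m M)).

Definition on_line (F : fieldType) (u w v : 'rV[F]_4) : Prop :=
  v != 0 /\ exists a b : F, v = a *: u + b *: w.

Definition same_line_orbit (F : fieldType) (u1 w1 u2 w2 : 'rV[F]_4) : Prop :=
  exists M : 'M[F]_4, in_Gq M /\
    forall v : 'rV[F]_4, v != 0 -> (on_line u1 w1 v <-> on_line u2 w2 (v *m M)).

(* Main.v *)
Require Import Defs.
From HB Require Import structures.
From mathcomp Require Import all_boot all_order all_algebra.
From mathcomp Require Import ring zify.
From mathcomp Require finfield.
Import GRing.Theory.
Local Open Scope ring_scope.

Section Pts.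
Variable F : fieldType.
Notation i0 := (@Ordinal 4 0 isT).
Notation i1 := (@Ordinal 4 1 isT).
Notation i2 := (@Ordinal 4 2 isT).
Notation i3 := (@Ordinal 4 3 isT).

Lemma rowvE (v : 'rV[F]_4) : v = mkpt (v 0 i0) (v 0 i1) (v 0 i2) (v 0 i3).
Proof.
apply/rowP => j; rewrite !mxE; case: j => [[|[|[|[|j]]]] hj] //=;
  by congr (v _ _); apply: val_inj.
Qed.

Lemma scale_mkpt (k a b c d : F) : k *: mkpt a b c d = mkpt (k*a) (k*b) (k*c) (k*d).
Proof. by apply/rowP => j; rewrite !mxE; case: j => [[|[|[|[|j]]]] hj]. Qed.

Lemma add_mkpt (a b c d a' b' c' d' : F) :
  mkpt a b c d + mkpt a' b' c' d' = mkpt (a+a') (b+b') (c+c') (d+d').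
Proof. by apply/rowP => j; rewrite !mxE; case: j => [[|[|[|[|j]]]] hj]. Qed.

Lemma mkpt_inj (a b c d a' b' c' d' : F) :
  mkpt a b c d = mkpt a' b' c' d' -> [/\ a = a', b = b', c = c' & d = d'].
Proof.
move=> h.
have h0 := congr1 (fun v : 'rV_4 => v 0 i0) h.
have h1 := congr1 (fun v : 'rV_4 => v 0 i1) h.
have h2 := congr1 (fun v : 'rV_4 => v 0 i2) h.
have h3 := congr1 (fun v : 'rV_4 => v 0 i3) h.
by move: h0 h1 h2 h3; rewrite !mxE.
Qed.

Lemma mkpt_mulmx (a b c d : F) (M : 'M[F]_4) :
  mkpt a b c d *m M =
  mkpt (a * M i0 i0 + b * M i1 i0 + c * M i2 i0 + d * M i3 i0)
       (a * M i0 i1 + b * M i1 i1 + c * M i2 i1 + d * M i3 i1)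
       (a * M i0 i2 + b * M i1 i2 + c * M i2 i2 + d * M i3 i2)
       (a * M i0 i3 + b * M i1 i3 + c * M i2 i3 + d * M i3 i3).
Proof.
apply/rowP => j; rewrite !mxE !big_ord_recr big_ord0 /= !mxE /= add0r.
case: j => [[|[|[|[|j]]]] hj] //=; rewrite ?addrA;
 repeat (congr (_ + _)); congr (_ * M _ _); apply: val_inj => //.
Qed.

Definition Mg (a b c d : F) : 'M[F]_4 :=
  \matrix_(r < 4, j < 4) nth 0 (nth [::]
   [:: [:: a^+3; a^+2*c; a*c^+2; c^+3];
       [:: 3%:R*a^+2*b; a^+2*d + 2%:R*a*b*c; 2%:R*a*c*d + b*c^+2; 3%:R*c^+2*d];
       [:: 3%:R*a*b^+2; b^+2*c+2%:R*a*b*d; a*d^+2+2%:R*b*c*d; 3%:R*c*d^+2];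
       [:: b^+3; b^+2*d; b*d^+2; d^+3]] r) j.

Lemma Mg_mul (a b c d : F) :
  Mg a b c d *m Mg d (-b) (-c) a = ((a*d - b*c)^+3)%:M.
Proof.
apply/matrixP => i j; rewrite !mxE !big_ord_recr big_ord0 /= !mxE /= add0r.
case: i => [[|[|[|[|i]]]] hi] //=; case: j => [[|[|[|[|j]]]] hj] //=; ring.
Qed.

Lemma pt_cubic (t a b c d : F) : mkpt (t^+3) (t^+2) t 1 *m Mg a b c d =
  mkpt ((a*t+b)^+3) ((a*t+b)^+2*(c*t+d)) ((a*t+b)*(c*t+d)^+2) ((c*t+d)^+3).
Proof. by rewrite mkpt_mulmx !mxE /=; congr mkpt; ring. Qed.

Lemma pt_inf (a b c d : F) : mkpt 1 0 0 0 *m Mg a b c d =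
  mkpt (a^+3) (a^+2*c) (a*c^+2) (c^+3).
Proof. by rewrite mkpt_mulmx !mxE /=; congr mkpt; ring. Qed.

Lemma cub_form (k u s : F) : k != 0 -> (u != 0) || (s != 0) ->
  on_twisted_cubic (k *: mkpt (u^+3) (u^+2*s) (u*s^+2) (s^+3)).
Proof.
move=> kn /orP h; have [s0|sn] := eqVneq s 0.
  right; exists (k * u^+3); split.
    by rewrite mulf_neq0 // expf_neq0 //; case: h => //; rewrite s0 eqxx.
  by rewrite !scale_mkpt s0; congr mkpt; ring.
left; exists (u / s); exists (k * s^+3); split; first by rewrite mulf_neq0 // expf_neq0.
by rewrite !scale_mkpt; congr mkpt; field.
Qed.

Lemma cubic_scale (k : F) v : k != 0 -> on_twisted_cubic v -> on_twisted_cubic (k *: v).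
Proof.
move=> kn [[t [c [cn ->]]]|[c [cn ->]]]; [left; exists t|right];
  exists (k * c); by rewrite mulf_neq0 // scalerA.
Qed.

Lemma cubic_fwd (a b c d : F) v : a * d - b * c != 0 ->
  on_twisted_cubic v -> on_twisted_cubic (v *m Mg a b c d).
Proof.
move=> hdet [[t [k [kn ->]]]|[k [kn ->]]]; rewrite -scalemxAl.
  rewrite pt_cubic; apply: cub_form => //.
  apply: contraR hdet; rewrite negb_or !negbK => /andP [/eqP h1 /eqP h2].
  apply/eqP; rewrite (_ : a * d - b * c = (c*t+d) * a - (a*t+b) * c); last ring.
  by rewrite h1 h2 !mul0r subrr.
rewrite pt_inf; apply: cub_form => //.
apply: contraR hdet; rewrite negb_or !negbK => /andP [/eqP h1 /eqP h2].
by rewrite h1 h2 !mul0r mulr0 subrr.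
Qed.

Lemma MM' (a b c d : F) (v : 'rV[F]_4) : v *m Mg a b c d *m Mg d (-b) (-c) a = (a*d-b*c)^+3 *: v.
Proof. by rewrite -mulmxA Mg_mul mul_mx_scalar. Qed.

Lemma in_Gq_Mg (a b c d : F) : a * d - b * c != 0 -> in_Gq (Mg a b c d).
Proof.
move=> hdet; split.
  have /mulmx1_unit [] // : Mg a b c d *m (((a*d-b*c)^+3)^-1 *: Mg d (-b) (-c) a) = 1%:M :> 'M[F]_4.
  by rewrite -scalemxAr Mg_mul scale_scalar_mx mulVf // expf_neq0.
move=> v _; split; first exact: cubic_fwd.
move=> hv.
have h' : on_twisted_cubic ((a * d - b * c) ^+ 3 *: v).
  rewrite -MM'; apply: cubic_fwd hv.
  by rewrite (_ : d * a - - b * - c = a * d - b * c) //; ring.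
have := @cubic_scale (((a * d - b * c) ^+ 3)^-1) _ _ h'.
by rewrite scalerA mulVf ?expf_neq0 // scale1r; apply; rewrite invr_eq0 expf_neq0.
Qed.


Lemma line_gen (M M' : 'M[F]_4) (k : F) (u1 w1 u2 w2 : 'rV[F]_4) : k != 0 ->
  (forall v : 'rV[F]_4, v *m M *m M' = k *: v) ->
  (exists p q, u1 *m M = p *: u2 + q *: w2) ->
  (exists p q, w1 *m M = p *: u2 + q *: w2) ->
  (exists p q, u2 *m M' = p *: u1 + q *: w1) ->
  (exists p q, w2 *m M' = p *: u1 + q *: w1) ->
  forall v, v != 0 -> (on_line u1 w1 v <-> on_line u2 w2 (v *m M)).
Proof.
move=> kn hMM [p1 [q1 h1]] [p2 [q2 h2]] [p3 [q3 h3]] [p4 [q4 h4]] v vn; split.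
  move=> [_ [al [be hv]]]; split.
    apply/eqP => h0; move: (hMM v); rewrite h0 mul0mx => /esym /eqP.
    by rewrite scaler_eq0 (negPf kn) /= (negPf vn).
  exists (al * p1 + be * p2); exists (al*q1 + be*q2).
  by rewrite hv mulmxDl -!scalemxAl h1 h2 !scalerDr !scalerDl !scalerA addrACA.
move=> [_ [al [be hv]]]; split => //.
have e : v = k^-1 *: (v *m M *m M') by rewrite hMM scalerA mulVf // scale1r.
exists (k^-1*(al * p3+be * p4)); exists (k^-1*(al*q3+be*q4)).
rewrite e hv mulmxDl -!scalemxAl h3 h4 !scalerDr !scalerA !mulrDr !scalerDl.
by rewrite addrACA.
Qed.

Lemma lcE (L R k P : F) : P = 0 -> L - R = k * P -> L = R.
Proof. by move=> -> /eqP; rewrite mulr0 subr_eq0 => /eqP. Qed.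

Ltac tryk E := first
  [ apply: (@lcE _ _ (1) _ E); field; try assumption; try done
  | apply: (@lcE _ _ (-1) _ E); field; try assumption; try done
  | apply: (@lcE _ _ (3%:R^-1) _ E); field; try assumption; try done
  | apply: (@lcE _ _ (-3%:R^-1) _ E); field; try assumption; try done ].

Ltac solveE := first [ring | match goal with H : _ = 0 |- _ => tryk H end].

Lemma orbit_of (a b c d : F) : (3%:R : F) != 0 -> a*d - b*c != 0 ->
  a^+3 + b^+3 - (a*c^+2 + b*d^+2) = 0 ->
  3%:R*(a^+2*c + b^+2*d) + (c^+3 + d^+3) = 0 ->
  3%:R*a*b^+2 - (a*d^+2 + 2%:R*b*c*d) = 0 ->
  b^+2*c + 2%:R*a*b*d + c*d^+2 = 0 ->
  same_line_orbit (mkpt (F:=F) 1 0 0 1) (mkpt 0 0 1 0) (mkpt 0 (- (3%:R)^-1) 0 1) (mkpt 1 0 1 0).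
Proof.
move=> h3 hdet E1 E2 E3 E4.
exists (Mg a b c d); split; first exact: in_Gq_Mg.
apply: (@line_gen _ (Mg d (-b) (-c) a) ((a*d-b*c)^+3)).
- by rewrite expf_neq0.
- by move=> v; rewrite MM'.
- exists ((mkpt 1 0 0 1 *m Mg a b c d) 0 i3); exists ((mkpt 1 0 0 1 *m Mg a b c d) 0 i0).
  rewrite !mkpt_mulmx !mxE /= !scale_mkpt add_mkpt; congr mkpt; solveE.
- exists ((mkpt 0 0 1 0 *m Mg a b c d) 0 i3); exists ((mkpt 0 0 1 0 *m Mg a b c d) 0 i0).
  rewrite !mkpt_mulmx !mxE /= !scale_mkpt add_mkpt; congr mkpt; solveE.
- exists ((mkpt 0 (-3%:R^-1) 0 1 *m Mg d (-b) (-c) a) 0 i3);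
  exists ((mkpt 0 (-3%:R^-1) 0 1 *m Mg d (-b) (-c) a) 0 i2).
  rewrite !mkpt_mulmx !mxE /= !scale_mkpt add_mkpt; congr mkpt; solveE.
- exists ((mkpt 1 0 1 0 *m Mg d (-b) (-c) a) 0 i3);
  exists ((mkpt 1 0 1 0 *m Mg d (-b) (-c) a) 0 i2).
  rewrite !mkpt_mulmx !mxE /= !scale_mkpt add_mkpt; congr mkpt; solveE.
Qed.


Lemma certP (z w i : F) (P Qz Qw Qi : F) : z^+3 = 2%:R -> w^+4 = -3%:R -> i^+2 = -1 ->
  P = Qz*(z^+3 - 2%:R) + Qw*(w^+4 + 3%:R) + Qi*(i^+2 + 1) -> P = 0.
Proof. by move=> hz hw hi ->; rewrite hz hw hi subrr !addNr !mulr0 !addr0. Qed.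

End Pts.

Lemma card_char (F : finFieldType) : (#|F|%:R : F) = 0.
Proof.
have h : \sum_(x : F) x = \sum_(x : F) (x + 1) := reindex_inj (addIr 1).
move/eqP: h; rewrite big_split /= -subr_eq0 opprD addrA subrr sub0r oppr_eq0.
by rewrite sumr_const => /eqP.
Qed.

Lemma sqrt_m1 (F : finFieldType) : (#|F| %% 4 = 1)%N -> exists i : F, i ^+ 2 = -1.
Proof.
move=> h4.
have hq : #|F| = (4 * (#|F| %/ 4)).+1 by rewrite {1}(divn_eq #|F| 4) h4 addn1 mulnC.
set k := (#|F| %/ 4)%N in hq.
have q1 : (1 < #|F|)%N := card_finNzRing_gt1 F.
have [a anz ak] : exists2 a : F, a != 0 & a ^+ (2 * k) != 1.
  have kpos : (0 < k)%N by move: q1; rewrite hq; lia.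
  apply/exists_inP; apply: contraTT q1 => /exists_inPn H.
  pose p : {poly F} := 'X^(2 * k) - 1.
  have pnz : p != 0.
    by rewrite /p -size_poly_eq0 size_XnsubC // muln_gt0.
  have := @max_poly_roots _ p (enum [pred a : F | a != 0]) pnz.
  rewrite enum_uniq -cardE cardC1 hq /= size_XnsubC ?muln_gt0 //.
  have -> : all (root p) (enum [pred a : F | a != 0]).
    apply/allP => z; rewrite mem_enum inE => zn.
    rewrite /root /p !hornerE; by move: (H z) => /(_ zn); rewrite negbK subr_eq0.
  by move=> /(_ isT isT); lia.
exists (a ^+ k).
have a4 : a ^+ (4 * k) = 1.
  have := finfield.expf_card a; rewrite hq exprS => h.
  by apply: (mulfI anz); rewrite mulr1.
have : (a ^+ k ^+ 2 - 1) * (a ^+ k ^+ 2 + 1) = 0.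
  have -> : (a ^+ k ^+ 2 - 1) * (a ^+ k ^+ 2 + 1) = a ^+ (4 * k) - 1.
    by rewrite (_ : (4 * k = k * 2 * 2)%N) ?exprM; [ring | lia].
  by rewrite a4 subrr.
move/eqP; rewrite mulf_eq0 => /orP [|]; rewrite ?subr_eq0 ?addr_eq0 -exprM mulnC.
  by rewrite (negPf ak).
by move/eqP.
Qed.

Theorem lemma7p5 (F : finFieldType) (q : nat) (hq : #|F| = q)
  (hq12 : (q %% 12 = 1)%N)
  (hcube : exists x : F, x ^+ 3 = - (2%:R)^-1)
  (hfourth : exists y : F, y ^+ 4 = - (3%:R)^-1) :
  (exists s : F, s ^+ 2 = - (3%:R)^-1) /\
  same_line_orbit (mkpt (F:=F) 1 0 0 1) (mkpt 0 0 1 0)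
                  (mkpt 0 (- (3%:R)^-1) 0 1) (mkpt 1 0 1 0).
Proof.
have q4 : (#|F| %% 4 = 1)%N by rewrite hq; lia.
have [i hi] := @sqrt_m1 F q4.
have hc := card_char F.
have hq' : #|F| = (12 * (q %/ 12)).+1 by rewrite hq; lia.
have h2 : (2%:R : F) != 0.
  apply/eqP => h2; move: hc; rewrite hq' -addn1 natrD natrM (_ : 12 = 2 * 6)%N // natrM h2.
  by rewrite !mul0r add0r => /eqP; rewrite oner_eq0.
have h3 : (3%:R : F) != 0.
  apply/eqP => h3; move: hc; rewrite hq' -addn1 natrD natrM (_ : 12 = 3 * 4)%N // natrM h3.
  by rewrite !mul0r add0r => /eqP; rewrite oner_eq0.
case: hcube => x hx; case: hfourth => y hy.
have yn : y != 0.
  apply/eqP => y0; move: hy; rewrite y0 expr0n /= => /eqP; rewrite eq_sym oppr_eq0 invr_eq0.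
  by rewrite (negPf h3).
have xn : x != 0.
  apply/eqP => x0; move: hx; rewrite x0 expr0n /= => /eqP; rewrite eq_sym oppr_eq0 invr_eq0.
  by rewrite (negPf h2).
split; first by exists (y^+2); rewrite -exprM.
pose z := - x^-1; pose w := y^-1.
have hz : z^+3 = 2%:R.
  have e : (- x^-1)^+3 = - (x^+3)^-1 by field.
  by rewrite /z e hx invrN opprK invrK.
have hw : w^+4 = -3%:R by rewrite /w exprVn hy invrN invrK.
pose a := -(z^+2) * (i * w^+2 - 1).
pose b := w^+2 - 1.
pose c := -(z^+2) * w * (i - 1).
pose d := -w * (w^+2 + 1 + 2%:R * i).
pose Z := z * w * (1 + 2%:R*i - w^+2).
apply: (@orbit_of F a b c d h3).
- apply/eqP => h0.
  have : (a * d - b * c) * Z - 48%:R = 0.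
    apply: (@certP F z w i _ (- (3%:R)*w^+2*i^+1 - (6%:R)*w^+2*i^+2 - (2%:R)*w^+4 + w^+4*i^+1 + (6%:R)*w^+4*i^+2 + (4%:R)*w^+4*i^+3 + (2%:R)*w^+6 - w^+6*i^+1 - w^+8*i^+1) (- (4%:R) + (8%:R)*i^+1 + (12%:R)*i^+2 + (8%:R)*i^+3 + (4%:R)*w^+2 - (2%:R)*w^+2*i^+1 - (2%:R)*w^+4*i^+1) (- (36%:R) - (24%:R)*i^+1 - (12%:R)*w^+2) hz hw hi); rewrite /a /b /c /d /Z; ring.
  rewrite h0 mul0r sub0r => /eqP; apply/negP.
  by rewrite oppr_eq0 (_ : 48 = 2 * 2 * 2 * 2 * 3)%N // !natrM !mulf_neq0.
- apply: (@certP F z w i _ ((2%:R) - (2%:R)*w^+2 - (2%:R)*w^+2*i^+1 - (2%:R)*w^+2*i^+2 + (2%:R)*w^+4*i^+1 + (2%:R)*w^+4*i^+2 + (2%:R)*w^+4*i^+3 - (2%:R)*w^+6*i^+3 + z^+3 - z^+3*w^+2 - z^+3*w^+2*i^+1 - z^+3*w^+2*i^+2 + z^+3*w^+4*i^+1 + z^+3*w^+4*i^+2 + z^+3*w^+4*i^+3 - z^+3*w^+6*i^+3) ((1%:R) + (4%:R)*i^+1 + (4%:R)*i^+3 - (4%:R)*w^+2*i^+1 - (4%:R)*w^+2*i^+3 - w^+4) (- (12%:R)*i^+1 + (12%:R)*w^+2*i^+1) hz hw hi); rewrite /a /b /c /d; ring.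
- apply: (@certP F z w i _ ((6%:R)*w^+1 - (6%:R)*w^+1*i^+1 + (2%:R)*w^+3 - (18%:R)*w^+3*i^+1 + (18%:R)*w^+3*i^+2 - (2%:R)*w^+3*i^+3 + (6%:R)*w^+5*i^+2 - (6%:R)*w^+5*i^+3 + (3%:R)*z^+3*w^+1 - (3%:R)*z^+3*w^+1*i^+1 + z^+3*w^+3 - (9%:R)*z^+3*w^+3*i^+1 + (9%:R)*z^+3*w^+3*i^+2 - z^+3*w^+3*i^+3 + (3%:R)*z^+3*w^+5*i^+2 - (3%:R)*z^+3*w^+5*i^+3) ((3%:R)*w^+1 - (18%:R)*w^+1*i^+1 - (12%:R)*w^+1*i^+3 - (6%:R)*w^+3 - (6%:R)*w^+3*i^+1 - w^+5) ((36%:R)*w^+1*i^+1 + (24%:R)*w^+3 - (12%:R)*w^+3*i^+1) hz hw hi); rewrite /a /b /c /d; ring.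
- apply: (@certP F z w i _ 0 (z^+2 + (4%:R)*z^+2*i^+1 + (4%:R)*z^+2*i^+3 + z^+2*w^+2 - (3%:R)*z^+2*w^+2*i^+1 + (4%:R)*z^+2*w^+2*i^+2 + z^+2*w^+4*i^+1) (- (12%:R)*z^+2*i^+1 - (12%:R)*z^+2*w^+2) hz hw hi); rewrite /a /b /c /d; ring.
- apply: (@certP F z w i _ 0 (z^+2*w^+1 + z^+2*w^+1*i^+1 + z^+2*w^+3 + z^+2*w^+3*i^+1) (- (4%:R)*z^+2*w^+3 - (4%:R)*z^+2*w^+3*i^+1) hz hw hi); rewrite /a /b /c /d; ring.
Qed.
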